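(* Let $\mathcal S\colon{\tt C}\to{\tt FVec}$ be a stem all of whose intrinsic cones are proper and with $A(c)\otimes_{\min}A(d)\subseteq A(c\otimes d)$ for all $c,d$. Let $\otimes$ be a tensor product of proper $\mathcal S$-systems. Then there exist an index set $I$ and, for each $i\in I$, proper $\mathcal S$-systems $\mathcal D_i$ on $V_i$ and $\mathcal E_i$ on $W_i$, an object $c_i\in{\tt C}$ and an element $x_i\in V_i\otimes W_i\otimes\mathcal S(c_i)$, such that for all proper $\mathcal S$-systems $\mathcal G$ on $X$, $\mathcal H$ on $Y$, all $c\in{\tt C}$ and all $a\in X\otimes Y\otimes\mathcal S(c)$: $$a\in(\mathcal G\otimes\mathcal H)(c)\iff \forall i\in I:\ x_i\otimes a\in(\mathcal D_i\otimes_{\min}\mathcal G)(\mathbf 1^* )\otimes_{\max}(\mathcal E_i\otimes_{\min}\mathcal H)(\mathbf 1^* )\otimes_{\max}A(c_i\otimes c).$$ Moreover, for any such data with $x_i\in(\mathcal D_i\otimes_{\max}\mathcal E_i)(c_i)$ for all $i$, the cones defined by the right-hand side contain $(\mathcal G\otimes_{\min}\mathcal H)(c)$.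
   Context: ${\tt FVec}$: finite-dimensional real vector spaces and linear maps, with the usual tensor product and duality $V\mapsto V'$. A stem is a $*$-autonomous functor $\mathcal S\colon{\tt C}\to{\tt FVec}$ from a $*$-autonomous category $({\tt C},\otimes,\mathbf 1,{}^* )$, with (suppressed) natural identifications $\mathcal S(c\otimes d)=\mathcal S(c)\otimes\mathcal S(d)$, $\mathcal S(\mathbf 1)=\mathcal S(\mathbf 1^* )=\mathbb R$, $\mathcal S(c^* )=\mathcal S(c)'$. Intrinsic cone: $A(c)=\{v\in\mathcal S(c)\mid\mathcal S(\varphi)(v)\geqslant0\ \forall\varphi\in{\tt C}(c,\mathbf 1^* )\}$; proper = closed, convex, sharp, nonempty interior. For closed convex cones $K_j\subseteq U_j$, $K_1\otimes_{\min}K_2$ is the closed convex cone generated by elementary tensors $k_1\otimes k_2$, and $K_1\otimes_{\max}\cdots\otimes_{\max}K_r=\{z\in U_1\otimes\cdots\otimes U_r\mid(\ell_1\otimes\cdots\otimes\ell_r)(z)\geqslant0\ \forall\ell_j\in K_j^\vee\}$. An $\mathcal S$-system on a finite-dimensional real space $X$ is a family of closed convex cones $\mathcal G(c)\subseteq X\otimes\mathcal S(c)$ with $({\rm id}_X\otimes\mathcal S(\varphi))(\mathcal G(c))\subseteq\mathcal G(d)$ for all $\varphi\in{\tt C}(c,d)$; proper if $\mathcal G(\mathbf 1)$ has nonempty interior and $\mathcal G(\mathbf 1^* )$ is sharp (both cones in $X$). The dual system: $\mathcal G^\vee(c)=\mathcal G(c^* )^\vee\subseteq X'\otimes\mathcal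 S(c)$. Completely positive maps $\psi\colon X\to Y$: $(\psi\otimes{\rm id}_{\mathcal S(c)})(\mathcal G(c))\subseteq\mathcal H(c)$ for all $c$. $\mathcal G\otimes_{\min}\mathcal H$ (for $\mathcal G$ on $X$, $\mathcal H$ on $Y$) is the smallest $\mathcal S$-system on $X\otimes Y$ whose cone at level $c\otimes d$ contains $\tau(g\otimes h)$ for all $c,d$, $g\in\mathcal G(c)$, $h\in\mathcal H(d)$ ($\tau$ the canonical reordering into $X\otimes Y\otimes\mathcal S(c\otimes d)$), and $\mathcal G\otimes_{\max}\mathcal H\coloneqq(\mathcal G^\vee\otimes_{\min}\mathcal H^\vee)^\vee$. A tensor product of proper $\mathcal S$-systems assigns to any two proper systems $\mathcal G$ on $X$, $\mathcal H$ on $Y$ a proper system $\mathcal G\otimes\mathcal H$ on $X\otimes Y$ such that $\varphi\otimes\psi$ is completely positive from $\mathcal G_1\otimes\mathcal H_1$ to $\mathcal G_2\otimes\mathcal H_2$ whenever $\varphi,\psi$ are completely positive from $\mathcal G_1$ to $\mathcal G_2$ and $\mathcal H_1$ to $\mathcal H_2$. In the displayed condition, $x_i\otimes a\in V_i\otimes W_i\otimes\mathcal S(c_i)\otimes X\otimes Y\otimes\mathcal S(c)$ is regarded, after the canonical reordering, as an element of $(V_i\otimes X\otimes\mathcal S(\mathbf 1^* ))\otimes(W_i\otimes Y\otimes\mathcal S(\mathbf 1^* ))\otimes\mathcal S(c_i\otimes c)$, using $\mathcal S(\mathbf 1^* )=\mathbb R$. *)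

(* Defs.v *)
(* Finite-dimensional real vector spaces are modelled in
   coordinates: a space with basis indexed by a finite type I is the space of
   functions I -> R; linear maps are matrices (I -> J -> R) acting on the right;
   the tensor product of the spaces with bases I and J has basis I * J, and the
   dual space of the space with basis I is identified (via the dual basis) with
   the space with basis I, the duality pairing being [pair]. *)
From HB Require Import structures.
From mathcomp Require Import all_boot all_order all_algebra.
From mathcomp Require Import reals.
Set Implicit Arguments.
Unset Strict Implicit.
Unset Printing Implicit Defensive.
Import Order.TTheory GRing.Theory Num.Theory.
Local Open Scope ring_scope.

Section LinAlg.
Variable R : realType.

Definition vec (I : finType) := I -> R.
Definition lmap (I J : finType) := I -> J -> R.

Definition app I J (M : lmap I J) (v : vec I) : vec J :=
  fun j => \sum_(i : I) v i * M i j.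
Definition mcomp I J K (M : lmap I J) (N : lmap J K) : lmap I K :=
  fun i k => \sum_(j : J) M i j * N j k.
Definition mid (I : finType) : lmap I I := fun i j => (i == j)%:R.
Definition transp I J (M : lmap I J) : lmap J I := fun j i => M i j.
Definition mtens I1 J1 I2 J2 (M : lmap I1 J1) (N : lmap I2 J2)
  : lmap (I1 * I2)%type (J1 * J2)%type := fun p q => M p.1 q.1 * N p.2 q.2.
Definition etens I J (u : vec I) (v : vec J) : vec (I * J)%type :=
  fun p => u p.1 * v p.2.
Definition pair I (l v : vec I) : R := \sum_(i : I) l i * v i.
Definition vzero I : vec I := fun _ => 0.
Definition vadd I (x y : vec I) : vec I := fun i => x i + y i.
Definition vscale I (r : R) (x : vec I) : vec I := fun i => r * x i.
Definition vopp I (x : vec I) : vec I := fun i => - x i.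
Definition one_vec : vec unit := fun _ => 1.

Definition vclosed I (K : vec I -> Prop) :=
  forall z, (forall e : R, 0 < e -> exists x, K x /\ forall i, `|x i - z i| < e) ->
  K z.
Definition ccone I (K : vec I -> Prop) :=
  [/\ vclosed K, K (@vzero I),
      (forall x y, K x -> K y -> K (vadd x y)) &
      (forall r x, 0 <= r -> K x -> K (vscale r x))].
Definition sharp I (K : vec I -> Prop) :=
  forall x, K x -> K (vopp x) -> x = @vzero I.
Definition has_interior I (K : vec I -> Prop) :=
  exists z, exists2 e : R, 0 < e & forall x, (forall i, `|x i - z i| < e) -> K x.
Definition proper_cone I (K : vec I -> Prop) :=
  [/\ ccone K, sharp K & has_interior K].
Definition dualc I (K : vec I -> Prop) : vec I -> Prop :=
  fun l => forall k, K k -> 0 <= pair l k.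
Definition ccgen I (A : vec I -> Prop) : vec I -> Prop :=
  fun z => forall K, ccone K -> (forall a, A a -> K a) -> K z.
Definition ctens_min I J (K1 : vec I -> Prop) (K2 : vec J -> Prop)
  : vec (I * J)%type -> Prop :=
  ccgen (fun z => exists k1 k2, [/\ K1 k1, K2 k2 & z = etens k1 k2]).
Definition ctens_max3 I J K (K1 : vec I -> Prop) (K2 : vec J -> Prop)
  (K3 : vec K -> Prop) : vec ((I * J) * K)%type -> Prop :=
  fun z => forall l1 l2 l3, dualc K1 l1 -> dualc K2 l2 -> dualc K3 l3 ->
     0 <= pair (etens (etens l1 l2) l3) z.
End LinAlg.

(* *-autonomous categories (symmetric monoidal + Barr's dualising functor)  *)
(* Composition is written in diagrammatic order: comp f g = g o f.          *)
Unset Implicit Arguments.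
Record sacat := SACat {
  Obj : Type;
  Hom : Obj -> Obj -> Type;
  idm : forall a, Hom a a;
  comp : forall a b c, Hom a b -> Hom b c -> Hom a c;
  comp_idl : forall a b (f : Hom a b), comp a a b (idm a) f = f;
  comp_idr : forall a b (f : Hom a b), comp a b b f (idm b) = f;
  compA : forall a b c d (f : Hom a b) (g : Hom b c) (h : Hom c d),
      comp a b d f (comp b c d g h) = comp a c d (comp a b c f g) h;
  tO : Obj -> Obj -> Obj;
  tM : forall a b c d, Hom a b -> Hom c d -> Hom (tO a c) (tO b d);
  tM_id : forall a c, tM a a c c (idm a) (idm c) = idm (tO a c);
  tM_comp : forall a b e c d f (f1 : Hom a b) (f2 : Hom b e) (g1 : Hom c d)
      (g2 : Hom d f), tM a e c f (comp a b e f1 f2) (comp c d f g1 g2)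
      = comp _ _ _ (tM a b c d f1 g1) (tM b e d f f2 g2);
  tunit : Obj;
  assoc : forall a b c, Hom (tO (tO a b) c) (tO a (tO b c));
  assoc_inv : forall a b c, Hom (tO a (tO b c)) (tO (tO a b) c);
  assoc_iso1 : forall a b c, comp _ _ _ (assoc a b c) (assoc_inv a b c) = idm _;
  assoc_iso2 : forall a b c, comp _ _ _ (assoc_inv a b c) (assoc a b c) = idm _;
  lunit : forall a, Hom (tO tunit a) a;
  lunit_inv : forall a, Hom a (tO tunit a);
  lunit_iso1 : forall a, comp _ _ _ (lunit a) (lunit_inv a) = idm _;
  lunit_iso2 : forall a, comp _ _ _ (lunit_inv a) (lunit a) = idm _;
  runit : forall a, Hom (tO a tunit) a;
  runit_inv : forall a, Hom a (tO a tunit);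
  runit_iso1 : forall a, comp _ _ _ (runit a) (runit_inv a) = idm _;
  runit_iso2 : forall a, comp _ _ _ (runit_inv a) (runit a) = idm _;
  sym : forall a b, Hom (tO a b) (tO b a);
  sym_inv : forall a b, comp _ _ _ (sym a b) (sym b a) = idm _;
  assoc_nat : forall a b c d e f (g1 : Hom a b) (g2 : Hom c d) (g3 : Hom e f),
      comp _ _ _ (tM _ _ _ _ (tM _ _ _ _ g1 g2) g3) (assoc b d f)
      = comp _ _ _ (assoc a c e) (tM _ _ _ _ g1 (tM _ _ _ _ g2 g3));
  lunit_nat : forall a b (f : Hom a b),
      comp _ _ _ (tM _ _ _ _ (idm tunit) f) (lunit b) = comp _ _ _ (lunit a) f;
  runit_nat : forall a b (f : Hom a b),
      comp _ _ _ (tM _ _ _ _ f (idm tunit)) (runit b) = comp _ _ _ (runit a) f;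
  sym_nat : forall a b c d (f : Hom a b) (g : Hom c d),
      comp _ _ _ (tM _ _ _ _ f g) (sym b d) = comp _ _ _ (sym a c) (tM _ _ _ _ g f);
  pentagon : forall a b c d,
      comp _ _ _ (tM _ _ _ _ (assoc a b c) (idm d))
           (comp _ _ _ (assoc a (tO b c) d) (tM _ _ _ _ (idm a) (assoc b c d)))
      = comp _ _ _ (assoc (tO a b) c d) (assoc a b (tO c d));
  triangle : forall a b,
      comp _ _ _ (assoc a tunit b) (tM _ _ _ _ (idm a) (lunit b))
      = tM _ _ _ _ (runit a) (idm b);
  hexagon : forall a b c,
      comp _ _ _ (assoc a b c) (comp _ _ _ (sym a (tO b c)) (assoc b c a))
      = comp _ _ _ (tM _ _ _ _ (sym a b) (idm c))
          (comp _ _ _ (assoc b a c) (tM _ _ _ _ (idm b) (sym a c)));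
  dO : Obj -> Obj;
  dM : forall a b, Hom a b -> Hom (dO b) (dO a);
  dM_id : forall a, dM a a (idm a) = idm (dO a);
  dM_comp : forall a b c (f : Hom a b) (g : Hom b c),
      dM a c (comp _ _ _ f g) = comp _ _ _ (dM b c g) (dM a b f);
  dM_ff : forall a b (g : Hom (dO b) (dO a)), exists! f : Hom a b, dM a b f = g;
  curry : forall a b c, Hom (tO a b) (dO c) -> Hom a (dO (tO b c));
  uncurry : forall a b c, Hom a (dO (tO b c)) -> Hom (tO a b) (dO c);
  curryK : forall a b c (f : Hom (tO a b) (dO c)), uncurry a b c (curry a b c f) = f;
  uncurryK : forall a b c (g : Hom a (dO (tO b c))), curry a b c (uncurry a b c g) = g;
  curry_nat : forall a' a b' b c' c (u : Hom a' a) (v : Hom b' b) (w : Hom c' c)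
      (f : Hom (tO a b) (dO c)),
      curry a' b' c' (comp _ _ _ (tM _ _ _ _ u v) (comp _ _ _ f (dM _ _ w)))
      = comp _ _ _ u (comp _ _ _ (curry a b c f) (dM _ _ (tM _ _ _ _ v w)))
}.

Arguments idm {s} a.
Arguments comp {s a b c}.
Arguments tO {s}.
Arguments tM {s a b c d}.
Arguments tunit {s}.
Arguments assoc {s}.
Arguments lunit {s}.
Arguments runit {s}.
Arguments sym {s}.
Arguments dO {s}.
Arguments dM {s a b}.
Arguments curry {s a b c}.

(* Stems: *-autonomous functors C -> FVec.  The (suppressed) identifications *)
(* S(c (x) d) = S(c) (x) S(d), S(1) = R, S(c^* ) = S(c)' are explicit linear *)
(* isomorphisms mu, eta, delta, required to be coherent.                    *)
Record stem (R : realType) (C : sacat) := Stem {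
  Sidx : Obj C -> finType;
  Smap : forall a b, Hom C a b -> lmap R (Sidx a) (Sidx b);
  Smap_id : forall a, Smap a a (idm a) = @mid R (Sidx a);
  Smap_comp : forall a b c (f : Hom C a b) (g : Hom C b c),
      Smap a c (comp f g) = mcomp (Smap a b f) (Smap b c g);
  mu : forall a b, lmap R (Sidx a * Sidx b)%type (Sidx (tO a b));
  mu_inv : forall a b, lmap R (Sidx (tO a b)) (Sidx a * Sidx b)%type;
  mu_iso1 : forall a b, mcomp (mu a b) (mu_inv a b) = @mid R _;
  mu_iso2 : forall a b, mcomp (mu_inv a b) (mu a b) = @mid R _;
  eta : lmap R unit (Sidx tunit);
  eta_inv : lmap R (Sidx tunit) unit;
  eta_iso1 : mcomp eta eta_inv = @mid R _;
  eta_iso2 : mcomp eta_inv eta = @mid R _;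
  (* S(a^* ) -> S(a)' *)
  delta : forall a, lmap R (Sidx (dO a)) (Sidx a);
  delta_inv : forall a, lmap R (Sidx a) (Sidx (dO a));
  delta_iso1 : forall a, mcomp (delta a) (delta_inv a) = @mid R _;
  delta_iso2 : forall a, mcomp (delta_inv a) (delta a) = @mid R _;
  mu_nat : forall a b c d (f : Hom C a b) (g : Hom C c d) u v,
      app (mu b d) (etens (app (Smap a b f) u) (app (Smap c d g) v))
      = app (Smap _ _ (tM f g)) (app (mu a c) (etens u v));
  mu_assoc : forall a b c u v w,
      app (Smap _ _ (assoc a b c))
        (app (mu (tO a b) c) (etens (app (mu a b) (etens u v)) w))
      = app (mu a (tO b c)) (etens u (app (mu b c) (etens v w)));
  mu_lunit : forall a v,
      app (Smap _ _ (lunit a))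
        (app (mu tunit a) (etens (app eta (one_vec R)) v)) = v;
  mu_runit : forall a v,
      app (Smap _ _ (runit a))
        (app (mu a tunit) (etens v (app eta (one_vec R)))) = v;
  mu_sym : forall a b u v,
      app (Smap _ _ (sym a b)) (app (mu a b) (etens u v))
      = app (mu b a) (etens v u);
  delta_nat : forall a b (f : Hom C a b) y,
      app (delta a) (app (Smap _ _ (dM f)) y)
      = app (transp (Smap a b f)) (app (delta b) y);
  (* compatibility with the *-autonomous bijection (currying in FVec) *)
  delta_curry : forall a b c (f : Hom C (tO a b) (dO c)) u v w,
      pair (app (delta c) (app (Smap _ _ f) (app (mu a b) (etens u v)))) w
      = pair (app (delta (tO b c)) (app (Smap _ _ (curry f)) u))
          (app (mu b c) (etens v w))
}.
Set Implicit Arguments.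

Arguments Sidx {R C}.
Arguments Smap {R C} s {a b}.
Arguments mu {R C} s.
Arguments eta {R C} s.
Arguments eta_inv {R C} s.
Arguments delta {R C} s.
Arguments delta_inv {R C} s.

Section Systems.
Unset Implicit Arguments.
Variables (R : realType) (C : sacat) (S : stem R C).

(* the identification S(1^* ) = S(1)' = R' = R *)
Definition sc1 (y : vec R (Sidx S (dO (@tunit C)))) : R :=
  pair (app (delta S tunit) y) (app (eta S) (one_vec R)).
(* the element of S(1^* ) corresponding to 1 in R *)
Definition e1 : vec R (Sidx S (dO (@tunit C))) :=
  app (delta_inv S tunit) (app (transp (eta_inv S)) (one_vec R)).
Definition u1 : vec R (Sidx S (@tunit C)) := app (eta S) (one_vec R).

Definition Acone (c : Obj C) : vec R (Sidx S c) -> Prop :=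
  fun v => forall phi : Hom C c (dO tunit), 0 <= sc1 (app (Smap S phi) v).

Definition system (X : finType) := forall c : Obj C, vec R (X * Sidx S c)%type -> Prop.

Definition idtens (X : finType) (I J : finType) (M : lmap R I J) (g : vec R (X * I)%type)
  : vec R (X * J)%type := fun p => \sum_(s : I) g (p.1, s) * M s p.2.
Definition tensid (X Y : finType) (I : finType) (psi : lmap R X Y) (g : vec R (X * I)%type)
  : vec R (Y * I)%type := fun p => \sum_(x : X) g (x, p.2) * psi x p.1.

Definition is_system X (G : system X) :=
  (forall c, ccone (G c)) /\
  (forall c d (f : Hom C c d) g, G c g -> G d (idtens X _ _ (Smap S f) g)).

(* G(1) and G(1^* ) regarded as cones in X *)
Definition cone_at1 X (G : system X) : vec R X -> Prop :=
  fun x => G tunit (etens x u1).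
Definition cone_at1s X (G : system X) : vec R X -> Prop :=
  fun x => G (dO tunit) (etens x e1).

Definition proper_system X (G : system X) :=
  [/\ is_system X G, has_interior (cone_at1 X G) & sharp (cone_at1s X G)].

(* dual system, on X' (identified with coordinates on X) *)
Definition sysdual X (G : system X) : system X :=
  fun c w => forall g, G (dO c) g -> 0 <= pair w (idtens X _ _ (delta S c) g).

Definition cp X Y (G : system X) (H : system Y) (psi : lmap R X Y) :=
  forall c g, G c g -> H c (tensid X Y _ psi g).

(* the canonical reordering of g (x) h into X (x) Y (x) S(c (x) d) *)
Definition tau (X Y : finType) (c d : Obj C) (g : vec R (X * Sidx S c)%type) (h : vec R (Y * Sidx S d)%type)
  : vec R ((X * Y) * Sidx S (tO c d))%type :=
  fun p => \sum_(s : Sidx S c) \sum_(t : Sidx S d)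
             g (p.1.1, s) * h (p.1.2, t) * mu S c d (s, t) p.2.

Definition systens_min X Y (G : system X) (H : system Y) : system (X * Y)%type :=
  fun e z => forall K : system (X * Y)%type, is_system _ K ->
    (forall c d g h, G c g -> H d h -> K (tO c d) (tau X Y c d g h)) -> K e z.

Definition systens_max X Y (G : system X) (H : system Y) : system (X * Y)%type :=
  sysdual (X * Y)%type (systens_min X Y (sysdual X G) (sysdual Y H)).

Definition sys_tensor (T : forall X Y : finType, system X -> system Y -> system (X * Y)%type) :=
  (forall X Y (G : system X) (H : system Y),
     proper_system X G -> proper_system Y H -> proper_system _ (T X Y G H)) /\
  (forall X1 X2 Y1 Y2 (G1 : system X1) (G2 : system X2) (H1 : system Y1)
     (H2 : system Y2) (phi : lmap R X1 X2) (psi : lmap R Y1 Y2),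
     proper_system _ G1 -> proper_system _ G2 -> proper_system _ H1 -> proper_system _ H2 ->
     cp _ _ G1 G2 phi -> cp _ _ H1 H2 psi -> cp _ _ (T _ _ G1 H1) (T _ _ G2 H2) (mtens phi psi)).

(* x (x) a, with x in V (x) W (x) S(c'), a in X (x) Y (x) S(c), regarded as an
   element of (V (x) X (x) S(1^* )) (x) (W (x) Y (x) S(1^* )) (x) S(c' (x) c),
   using S(1^* ) = R and S(c') (x) S(c) = S(c' (x) c). *)
Definition xa_tens (V W X Y : finType) (c' c : Obj C) (x : vec R ((V * W) * Sidx S c')%type)
  (a : vec R ((X * Y) * Sidx S c)%type)
  : vec R ((((V * X) * Sidx S (dO tunit)) * ((W * Y) * Sidx S (dO tunit)))
           * Sidx S (tO c' c))%type :=
  fun p => e1 p.1.1.2 * e1 p.1.2.2 *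
    \sum_(s : Sidx S c') \sum_(t : Sidx S c)
       x ((p.1.1.1.1, p.1.2.1.1), s) * a ((p.1.1.1.2, p.1.2.1.2), t) * mu S c' c (s, t) p.2.

Definition rhs_cond V W X Y (D : system V) (E : system W) (G : system X) (H : system Y)
  (c' : Obj C) (x : vec R ((V * W) * Sidx S c')%type) (c : Obj C)
  (a : vec R ((X * Y) * Sidx S c)%type) : Prop :=
  ctens_max3 (systens_min V X D G (dO tunit)) (systens_min W Y E H (dO tunit))
             (Acone (tO c' c)) (xa_tens V W X Y c' c x a).

End Systems.

(* Main.v *)
Require Import Defs.
From HB Require Import structures.
From mathcomp Require Import all_boot all_order all_algebra.
From mathcomp Require Import reals.
From mathcomp Require Import boolp classical_sets.
From mathcomp.algebra_tactics Require Import ring lra.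
Require Import Defs.
Set Implicit Arguments.
Unset Strict Implicit.
Unset Printing Implicit Defensive.
Import Order.TTheory GRing.Theory Num.Theory.
Local Open Scope ring_scope.

Set Implicit Arguments.

Section Lin.
Variable R : realType.

Lemma pairC (I : finType) (l v : vec R I) : pair l v = pair v l.
Proof. by apply: eq_bigr => i _; rewrite mulrC. Qed.

Lemma pair_app (I J : finType) (M : lmap R I J) l v :
  pair l (app M v) = pair (app (transp M) l) v.
Proof.
rewrite /pair /app /transp.
under eq_bigr do rewrite big_distrr.
rewrite exchange_big; apply: eq_bigr => i _; rewrite big_distrl.
by apply: eq_bigr => j _; rewrite /= mulrCA mulrC.
Qed.

Lemma app_mcomp (I J K : finType) (M : lmap R I J) (N : lmap R J K) v :
  app (mcomp M N) v = app N (app M v).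
Proof.
apply: funext => k; rewrite /app /mcomp.
under eq_bigr do rewrite big_distrr.
rewrite exchange_big; apply: eq_bigr => j _; rewrite big_distrl.
by apply: eq_bigr => i _; rewrite /= mulrA.
Qed.

Lemma app_mid (I : finType) (v : vec R I) : app (@mid R I) v = v.
Proof.
apply: funext => j; rewrite /app /mid (bigD1 j) //= eqxx mulr1 big1 ?addr0 //.
by move=> i /negbTE ->; rewrite mulr0.
Qed.

Lemma pair_mid_l (I : finType) (v : vec R I) j : pair (fun i => (i == j)%:R) v = v j.
Proof.
rewrite /pair (bigD1 j) //= eqxx mul1r big1 ?addr0 //.
by move=> i /negbTE ->; rewrite mul0r.
Qed.

Lemma app_add (I J : finType) (M : lmap R I J) u v :
  app M (vadd u v) = vadd (app M u) (app M v).
Proof. apply: funext => j; rewrite /app /vadd -big_split /=.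
by apply: eq_bigr => i _; rewrite mulrDl. Qed.

Lemma app_scale (I J : finType) (M : lmap R I J) r v :
  app M (vscale r v) = vscale r (app M v).
Proof. apply: funext => j; rewrite /app /vscale big_distrr /=.
by apply: eq_bigr => i _; rewrite mulrA. Qed.

Lemma app_zero (I J : finType) (M : lmap R I J) :
  app M (@vzero R I) = @vzero R J.
Proof. by apply: funext => j; rewrite /app /vzero big1 // => i _; rewrite mul0r. Qed.

Lemma pair_addr (I : finType) (l u v : vec R I) :
  pair l (vadd u v) = pair l u + pair l v.
Proof. by rewrite /pair -big_split; apply: eq_bigr => i _; rewrite mulrDr. Qed.

Lemma pair_scaler (I : finType) (l v : vec R I) r :
  pair l (vscale r v) = r * pair l v.
Proof. by rewrite /pair big_distrr; apply: eq_bigr => i _; rewrite mulrCA. Qed.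

Lemma pair_zeror (I : finType) (l : vec R I) : pair l (@vzero R I) = 0.
Proof. by rewrite /pair big1 // => i _; rewrite mulr0. Qed.

Definition slice (X I : finType) (g : vec R (X * I)%type) (x : X) : vec R I :=
  fun s => g (x, s).

Lemma pair_prod (X I : finType) (l g : vec R (X * I)%type) :
  pair l g = \sum_(x : X) pair (slice l x) (slice g x).
Proof. by rewrite /pair pair_big /=; apply: eq_bigr => -[x s]. Qed.

Lemma pair_etens (I J : finType) (a b : vec R I) (c d : vec R J) :
  pair (etens a c) (etens b d) = pair a b * pair c d.
Proof.
rewrite pair_prod /pair big_distrl /=; apply: eq_bigr => i _.
rewrite big_distrr /=; apply: eq_bigr => j _; rewrite /slice /etens /=.
by rewrite mulrACA.
Qed.

End Lin.


Set Implicit Arguments.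

Section Coh.
Variables (R : realType) (C : sacat) (S : stem R C).

Notation SM := (Smap S).
Notation dl := (delta S).
Notation u1 := (u1 R C S).

Lemma Sapp_comp a b c (f : Hom C a b) (g : Hom C b c) v :
  app (SM (comp f g)) v = app (SM g) (app (SM f) v).
Proof. by rewrite Smap_comp app_mcomp. Qed.

Lemma Sapp_id a v : app (SM (idm a)) v = v.
Proof. by rewrite Smap_id app_mid. Qed.

Lemma Sapp_rinv a (u : vec R (Sidx S a)) :
  app (SM (runit_inv C a)) u = app (mu S a tunit) (etens u u1).
Proof.
rewrite -{1}(mu_runit R C S a u) -Sapp_comp runit_iso1 Sapp_id //.
Qed.

Lemma pair_transp (I J : finType) (M : lmap R I J) (l : vec R J) (v : vec R I) :
  pair (app (transp M) l) v = pair l (app M v).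
Proof. by rewrite pair_app. Qed.

Definition thetaP a b (psi : Hom C (tO a b) (dO tunit)) : Hom C b (dO a) :=
  comp (curry (comp (sym b a) psi)) (dM (runit_inv C a)).

Lemma thetaP_spec a b (psi : Hom C (tO a b) (dO tunit)) u v :
  pair (app (dl a) (app (SM (thetaP psi)) v)) u =
  sc1 R C S (app (SM psi) (app (mu S a b) (etens u v))).
Proof.
rewrite /thetaP Sapp_comp delta_nat pair_transp Sapp_rinv.
rewrite -delta_curry Sapp_comp mu_sym //.
Qed.

Definition psiT a b (th : Hom C b (dO a)) : Hom C (tO a b) (dO tunit) :=
  comp (sym a b) (uncurry C _ _ _ (comp th (dM (runit a)))).

Lemma thetaP_psiT a b (th : Hom C b (dO a)) : thetaP (psiT th) = th.
Proof.
rewrite /thetaP /psiT compA sym_inv comp_idl uncurryK -compA -dM_comp.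
by rewrite runit_iso2 dM_id comp_idr.
Qed.

Lemma psiT_spec a b (th : Hom C b (dO a)) u v :
  pair (app (dl a) (app (SM th) v)) u =
  sc1 R C S (app (SM (psiT th)) (app (mu S a b) (etens u v))).
Proof. by rewrite -thetaP_spec thetaP_psiT. Qed.

Definition evm c : Hom C (tO (dO c) c) (dO tunit) :=
  comp (sym (dO c) c) (psiT (idm (dO c))).

Lemma evm_spec c (u : vec R (Sidx S (dO c))) (v : vec R (Sidx S c)) :
  sc1 R C S (app (SM (evm c)) (app (mu S (dO c) c) (etens u v))) =
  pair (app (dl c) u) v.
Proof. by rewrite /evm Sapp_comp mu_sym -psiT_spec Sapp_id. Qed.

Definition ddm c : Hom C c (dO (dO c)) := thetaP (evm c).

Lemma ddm_spec c (v : vec R (Sidx S c)) (u : vec R (Sidx S (dO c))) :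
  pair (app (dl (dO c)) (app (SM (ddm c)) v)) u = pair (app (dl c) u) v.
Proof. by rewrite thetaP_spec evm_spec. Qed.

Definition ddinv c : Hom C (dO (dO c)) c :=
  proj1_sig (cid (dM_ff C _ _ (ddm (dO c)))).

Lemma ddinv_spec c (y : vec R (Sidx S (dO c))) (g : vec R (Sidx S (dO (dO c)))) :
  pair (app (dl c) y) (app (SM (ddinv c)) g) = pair (app (dl (dO c)) g) y.
Proof.
rewrite /ddinv; case: cid => f [Hf _] /=.
by rewrite -pair_transp -delta_nat Hf ddm_spec.
Qed.

End Coh.


Set Implicit Arguments.

Lemma sum_unit (R : realType) (F : unit -> R) : \sum_(u : unit) F u = F tt.
Proof. by rewrite (bigD1 tt) //= big_pred0 ?addr0 // => -[]. Qed.

Section One.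
Variables (R : realType) (C : sacat) (S : stem R C).
Notation dl := (delta S).
Notation sc1 := (sc1 R C S).
Notation e1 := (e1 R C S).

Lemma delta_K a (y : vec R (Sidx S (dO a))) : app (delta_inv S a) (app (dl a) y) = y.
Proof. by rewrite -app_mcomp delta_iso1 app_mid. Qed.

Lemma delta_Kinv a (y : vec R (Sidx S a)) : app (dl a) (app (delta_inv S a) y) = y.
Proof. by rewrite -app_mcomp delta_iso2 app_mid. Qed.

Lemma eta_rel s s' : eta_inv S s tt * eta S tt s' = (s == s')%:R.
Proof.
have := congr1 (fun M => M s s') (eta_iso2 R C S).
by rewrite /mcomp /mid sum_unit.
Qed.

Lemma eta_rel1 : \sum_s eta S tt s * eta_inv S s tt = 1.
Proof.
by have := congr1 (fun M => M tt tt) (eta_iso1 R C S); rewrite /mcomp /mid eqxx.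
Qed.

Lemma dl_e1 : app (dl tunit) e1 = fun s => eta_inv S s tt.
Proof.
rewrite /e1 delta_Kinv; apply: funext => s.
by rewrite /app /transp sum_unit /one_vec mul1r.
Qed.

Lemma sc1_e1 : sc1 e1 = 1.
Proof.
rewrite /Defs.sc1 dl_e1 /pair -eta_rel1; apply: eq_bigr => s _.
by rewrite /app sum_unit /one_vec mul1r mulrC.
Qed.

Lemma dec1 (y : vec R (Sidx S (dO tunit))) s : y s = sc1 y * e1 s.
Proof.
rewrite -{1}(delta_K y) /e1.
set z := app (dl tunit) y.
have -> : app (transp (eta_inv S)) (one_vec R) = fun s => eta_inv S s tt.
  by apply: funext => t; rewrite /app /transp sum_unit /one_vec mul1r.
set K := \sum_s' z s' * eta S tt s'.
have -> : sc1 y = K.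
  by rewrite /Defs.sc1 /pair; apply: eq_bigr => t _; rewrite /app sum_unit /one_vec mul1r.
have Hz : z = fun t => eta_inv S t tt * K.
  apply: funext => t; rewrite /K big_distrr /=.
  rewrite (bigD1 t) //= big1 ?addr0.
    by rewrite mulrCA eta_rel eqxx mulr1.
  by move=> s' /negbTE Hs; rewrite mulrCA eta_rel eq_sym Hs mulr0.
rewrite Hz /app big_distrr; apply: eq_bigr => t _ /=.
by rewrite mulrA [K * _]mulrC.
Qed.

Definition f1 : vec R (Sidx S (dO tunit)) := app (transp (dl tunit)) (u1 R C S).

Lemma sc1_pair y : sc1 y = pair f1 y.
Proof. by rewrite /Defs.sc1 pairC pair_app. Qed.

End One.


Set Implicit Arguments.

Section Cones.
Variable R : realType.

Lemma pair_est (I : finType) (f x z : vec R I) (e : R) :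
  (forall i, `|x i - z i| <= e) -> `|pair f x - pair f z| <= e * \sum_i `|f i|.
Proof.
move=> H; rewrite /pair -sumrB big_distrr /=.
apply: le_trans (ler_norm_sum _ _ _) _; apply: ler_sum => i _.
by rewrite -mulrBr normrM mulrC ler_wpM2r.
Qed.

Lemma sum_abs_ge0 (I : finType) (f : I -> R) : 0 <= \sum_i `|f i|.
Proof. by apply: sumr_ge0 => i _. Qed.

Lemma ccone_half (I : finType) (T : Type) (P : T -> Prop) (f : T -> vec R I) :
  ccone (fun z => forall t, P t -> 0 <= pair (f t) z).
Proof.
split.
- move=> z Hz t Pt; rewrite leNgt; apply/negP => Hlt.
  set B := 1 + \sum_i `|f t i|.
  have B0 : 0 < B by rewrite /B; have := sum_abs_ge0 (f t); lra.
  have e0 : 0 < - pair (f t) z / B by rewrite divr_gt0 // oppr_gt0.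
  have [x [Kx Hx]] := Hz _ e0.
  have := pair_est (f t) (fun i => ltW (Hx i)).
  have := Kx t Pt.
  set p := pair (f t) x; set q := pair (f t) z; set e := - q / B.
  have eB : e * B = - q by rewrite /e divfK // gt_eqF.
  have : e * \sum_i `|f t i| < e * B.
    by rewrite ltr_pM2l // /B ltrDr.
  move: eB; rewrite ler_norml; lra.
- by move=> t _; rewrite pair_zeror.
- by move=> x y Hx Hy t Pt; rewrite pair_addr addr_ge0 ?Hx ?Hy.
- by move=> r x r0 Hx t Pt; rewrite pair_scaler mulr_ge0 ?Hx.
Qed.

Lemma ccone_dualc (I : finType) (K : vec R I -> Prop) : ccone (dualc K).
Proof.
have := @ccone_half I (vec R I) K id.
case=> H1 H2 H3 H4; split => //.
- by move=> z Hz k Kk; rewrite pairC; apply: H1 => // e /Hz [x [Hx1 Hx2]];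
    exists x; split => // k' Kk'; rewrite pairC; exact: Hx1.
- by move=> k _; rewrite pairC pair_zeror.
- by move=> x y Hx Hy k Kk; rewrite pairC pair_addr addr_ge0 // pairC ?Hx ?Hy.
- by move=> r x r0 Hx k Kk; rewrite pairC pair_scaler mulr_ge0 // pairC Hx.
Qed.

Lemma app_coord (I J : finType) (M : lmap R I J) v j :
  app M v j = pair (fun i => M i j) v.
Proof. by rewrite /app /pair; apply: eq_bigr => i _; rewrite mulrC. Qed.

Lemma ccone_pre (I J : finType) (M : lmap R I J) (K : vec R J -> Prop) :
  ccone K -> ccone (fun z => K (app M z)).
Proof.
case=> Kc K0 KD KZ; split.
- move=> z Hz; apply: Kc => e e0.
  set B := 1 + \sum_j \sum_i `|M i j|.
  have B1 : 0 < B.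
    rewrite /B; have : 0 <= \sum_j \sum_i `|M i j| by apply: sumr_ge0 => j _; exact: sum_abs_ge0.
    lra.
  have eB : 0 < e / B by rewrite divr_gt0.
  have [x [Kx Hx]] := Hz _ eB.
  exists (app M x); split => // j.
  rewrite !app_coord.
  apply: le_lt_trans (pair_est _ (fun i => ltW (Hx i))) _.
  have : \sum_i `|M i j| <= \sum_j \sum_i `|M i j|.
    rewrite (bigD1 j) //= lerDl; apply: sumr_ge0 => k _; exact: sum_abs_ge0.
  move=> Hle.
  have : e / B * B = e by rewrite divfK // gt_eqF.
  have : e / B * \sum_i `|M i j| <= e / B * \sum_j \sum_i `|M i j|.
    by rewrite ler_wpM2l // ltW.
  rewrite /B in eB *; nra.
- by rewrite app_zero.
- by move=> x y Hx Hy; rewrite app_add; apply: KD.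
- by move=> r x r0 Hx; rewrite app_scale; apply: KZ.
Qed.

Lemma ccone_inter (I : finType) (T : Type) (P : T -> Prop) (K : T -> vec R I -> Prop) :
  (forall t, P t -> ccone (K t)) -> ccone (fun z => forall t, P t -> K t z).
Proof.
move=> HK; split.
- move=> z Hz t Pt; have [Kc _ _ _] := HK t Pt; apply: Kc => e e0.
  by have [x [Hx1 Hx2]] := Hz e e0; exists x; split => //; apply: Hx1.
- by move=> t Pt; have [] := HK t Pt.
- by move=> x y Hx Hy t Pt; have [_ _ KD _] := HK t Pt; apply: KD; auto.
- by move=> r x r0 Hx t Pt; have [_ _ _ KZ] := HK t Pt; apply: KZ; auto.
Qed.

End Cones.


Set Implicit Arguments.

Lemma ccone_ext (R : realType) (I : finType) (K K' : vec R I -> Prop) :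
  (forall z, K z <-> K' z) -> ccone K -> ccone K'.
Proof.
move=> H [H1 H2 H3 H4]; split.
- move=> z Hz; apply/H; apply: H1 => e /Hz [x [/H ? ?]]; by exists x.
- exact/H.
- by move=> x y /H ? /H ?; apply/H; auto.
- by move=> r x ? /H ?; apply/H; auto.
Qed.

Lemma sum_pair (R : realType) (X I : finType) (F : (X * I)%type -> R) :
  \sum_(p : (X * I)%type) F p = \sum_(x : X) \sum_(s : I) F (x, s).
Proof. by rewrite pair_big; apply: eq_bigr => -[]. Qed.

Section Sys.
Variables (R : realType) (C : sacat) (S : stem R C).
Notation SM := (Smap S).
Notation dl := (delta S).
Notation system := (system R C S).
Notation is_sys G := (is_system R C S _ G).
Notation sdual G := (sysdual R C S _ G).
Notation smin G H := (systens_min R C S _ _ G H).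
Notation cpm G H psi := (cp R C S _ _ G H psi).



Definition idtensM (X I J : finType) (M : lmap R I J) : lmap R (X * I)%type (X * J)%type :=
  fun p q => (p.1 == q.1)%:R * M p.2 q.2.

Lemma idtens_app (X I J : finType) (M : lmap R I J) g :
  idtens R X I J M g = app (@idtensM X I J M) g.
Proof.
apply: funext => -[x j]; rewrite /idtens /app /idtensM sum_pair /=.
rewrite [RHS](bigD1 x) //= [X in _ + X]big1 ?addr0.
  by apply: eq_bigr => s _; rewrite eqxx mul1r.
by move=> y Hy; rewrite big1 // => s _; rewrite (negbTE Hy) mul0r mulr0.
Qed.

Definition tensidM (X Y I : finType) (psi : lmap R X Y) : lmap R (X * I)%type (Y * I)%type :=
  fun p q => psi p.1 q.1 * (p.2 == q.2)%:R.

Lemma tensid_app (X Y I : finType) (psi : lmap R X Y) g :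
  tensid R X Y I psi g = app (@tensidM X Y I psi) g.
Proof.
apply: funext => -[y s]; rewrite /tensid /app /tensidM sum_pair /=.
apply: eq_bigr => x _.
rewrite (bigD1 s) //= big1 ?addr0 ?eqxx ?mulr1 //.
by move=> t /negbTE Ht; rewrite Ht mulr0 mulr0.
Qed.

Lemma slice_idtens (X I J : finType) (M : lmap R I J) g x :
  slice (idtens R X I J M g) x = app M (slice g x).
Proof. by []. Qed.

Lemma idtens_comp (X : finType) a b c (f : Hom C a b) (g : Hom C b c) z :
  idtens R X _ _ (SM g) (idtens R X _ _ (SM f) z) = idtens R X _ _ (SM (comp f g)) z.
Proof.
apply: funext => -[x j].
by have := congr1 (fun v => v j) (Sapp_comp f g (slice z x)).
Qed.

Lemma idtens_mid (X I : finType) z : idtens R X I I (@mid R I) z = z.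
Proof. by apply: funext => -[x j]; have := congr1 (fun v => v j) (app_mid (slice z x)). Qed.

Lemma idtens_id (X : finType) a z : idtens R X _ _ (SM (idm a)) z = z.
Proof. by rewrite Smap_id idtens_mid. Qed.

Lemma pair_idtens (X I J : finType) (M : lmap R I J) l g :
  pair l (idtens R X I J M g) = \sum_x pair (slice l x) (app M (slice g x)).
Proof. by rewrite pair_prod. Qed.

Lemma sysdual_system X (G : system X) : is_sys G -> is_sys (sdual G).
Proof.
move=> [Gc Gm]; split.
- move=> c; apply: ccone_ext (ccone_half (G (dO c)) (fun g => idtens R X _ _ (dl c) g)).
  by move=> z; split => H g Hg; rewrite pairC; apply: H.
- move=> c d f w Hw g Hg.
  have := Hw _ (Gm _ _ (dM f) g Hg).
  rewrite !pair_idtens; congr (0 <= _); apply: eq_bigr => x _.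
  by rewrite !slice_idtens delta_nat pair_app.
Qed.

Lemma tau_slice (X Y : finType) c d g h x y :
  slice (tau R C S X Y c d g h) (x, y) = app (mu S c d) (etens (slice g x) (slice h y)).
Proof.
apply: funext => r; rewrite /slice /tau /app sum_pair /=.
by apply: eq_bigr => s _; apply: eq_bigr => t _.
Qed.

Lemma systens_min_system X Y (G : system X) (H : system Y) :
  is_sys (smin G H).
Proof.
split.
- move=> c; apply: ccone_ext (ccone_inter (P := fun K => is_sys K /\
     (forall c d g h, G c g -> H d h -> K (tO c d) (tau R C S X Y c d g h)))
     (K := fun K => K c) _).
    move=> z; split => Hz.
      by move=> K HK1 HK2; apply: (Hz K); split.
    by move=> K [HK1 HK2]; apply: Hz.
  by move=> K [[HK _] _].
- move=> c d f g Hg K HK1 HK2.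
  by apply: HK1.2; apply: Hg.
Qed.

Lemma systens_min_gen X Y (G : system X) (H : system Y) c d g h :
  G c g -> H d h -> smin G H (tO c d) (tau R C S X Y c d g h).
Proof. by move=> Hg Hh K _ HK; apply: HK. Qed.

Lemma tensid_idtens (X Y I J : finType) (psi : lmap R X Y) (M : lmap R I J) g :
  tensid R X Y J psi (idtens R X I J M g) = idtens R Y I J M (tensid R X Y I psi g).
Proof.
apply: funext => -[y j]; rewrite /tensid /idtens /=.
under eq_bigr do rewrite big_distrl.
rewrite exchange_big; apply: eq_bigr => s _; rewrite big_distrl /=.
by apply: eq_bigr => x _; rewrite mulrAC.
Qed.

Lemma tensid_tau (X1 X2 Y1 Y2 : finType) (phi : lmap R X1 X2) (psi : lmap R Y1 Y2) c d g h :
  tensid R _ _ _ (mtens phi psi) (tau R C S X1 Y1 c d g h) =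
  tau R C S X2 Y2 c d (tensid R _ _ _ phi g) (tensid R _ _ _ psi h).
Proof.
apply: funext => -[[x2 y2] r]; rewrite /tensid /tau /mtens /= sum_pair.
transitivity (\sum_s \sum_t \sum_x \sum_y
   g (x, s) * h (y, t) * mu S c d (s, t) r * (phi x x2 * psi y y2)).
  transitivity (\sum_x \sum_y \sum_s \sum_t
     g (x, s) * h (y, t) * mu S c d (s, t) r * (phi x x2 * psi y y2)).
    apply: eq_bigr => x _; apply: eq_bigr => y _ /=; rewrite big_distrl.
    by apply: eq_bigr => s _; rewrite big_distrl.
  under eq_bigr do (rewrite exchange_big; under eq_bigr do rewrite exchange_big).
  rewrite exchange_big; apply: eq_bigr => s _; exact: exchange_big.
apply: eq_bigr => s _; apply: eq_bigr => t _.
rewrite !big_distrl; apply: eq_bigr => x _ /=.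
rewrite big_distrr big_distrl /=; apply: eq_bigr => y _; ring.
Qed.

Lemma systens_min_functor X1 X2 Y1 Y2 (G1 : system X1) (G2 : system X2)
  (H1 : system Y1) (H2 : system Y2) phi psi :
  is_sys G2 -> is_sys H2 ->
  cpm G1 G2 phi -> cpm H1 H2 psi ->
  cpm (smin G1 H1) (smin G2 H2) (mtens phi psi).
Proof.
move=> HG2 HH2 Hphi Hpsi c z Hz.
apply: (Hz (fun e z => smin G2 H2 e (tensid R _ _ _ (mtens phi psi) z))).
- split.
  + move=> e; apply: ccone_ext (ccone_pre (@tensidM _ _ _ (mtens phi psi))
       ((systens_min_system G2 H2).1 e)).
    by move=> w; rewrite tensid_app.
  + move=> e e' f w Hw; rewrite tensid_idtens.
    exact: (systens_min_system G2 H2).2.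
- move=> c1 c2 g h Hg Hh; rewrite tensid_tau.
  by apply: systens_min_gen; [apply: Hphi | apply: Hpsi].
Qed.

End Sys.


Set Implicit Arguments.

Section Core.
Variables (R : realType) (C : sacat) (S : stem R C).
Notation SM := (Smap S).
Notation dl := (delta S).
Notation system := (system R C S).
Notation is_sys G := (is_system R C S _ G).
Notation sdual G := (sysdual R C S _ G).
Notation smin G H := (systens_min R C S _ _ G H).
Notation cpm G H psi := (cp R C S _ _ G H psi).
Notation e1 := (e1 R C S).
Notation sc1 := (sc1 R C S).

Lemma sum2_prod (I J : finType) (A : I -> R) (B : J -> R) (c t : R) :
  c * ((\sum_i A i) * (\sum_j B j) * t) = \sum_j \sum_i c * A i * B j * t.
Proof.
rewrite big_distrlr /= exchange_big big_distrl big_distrr /=.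
apply: eq_bigr => j _; rewrite big_distrl big_distrr /=.
by apply: eq_bigr => i _; ring.
Qed.

Lemma swap22 (A B I J : finType) (F : A -> B -> I -> J -> R) :
  \sum_a \sum_b \sum_i \sum_j F a b i j = \sum_i \sum_j \sum_a \sum_b F a b i j.
Proof.
rewrite -(sum_pair (fun p : (A * B)%type => \sum_i \sum_j F p.1 p.2 i j)).
rewrite exchange_big; apply: eq_bigr => i _.
rewrite exchange_big; apply: eq_bigr => j _.
by rewrite sum_pair.
Qed.

Definition phi_of (V X : finType) (l : vec R ((V * X) * Sidx S (dO tunit))%type) : lmap R X V :=
  fun x v => \sum_s l ((v, x), s) * e1 s.

Lemma I1 (V W X Y : finType) c' c (x : vec R ((V * W) * Sidx S c')%type)
  (a : vec R ((X * Y) * Sidx S c)%type) l1 l2 (l3 : vec R (Sidx S (tO c' c))) :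
  pair (etens (etens l1 l2) l3) (xa_tens R C S V W X Y c' c x a) =
  pair l3 (app (mu S c' c) (fun st => \sum_(vw : (V * W)%type) x (vw, st.1) *
      tensid R _ _ _ (mtens (phi_of l1) (phi_of l2)) a (vw, st.2))).
Proof.
rewrite /pair /xa_tens /etens /app /tensid /mtens /phi_of /=.
set P1 := fun (v : V) (x0 : X) => \sum_s l1 ((v, x0), s) * e1 s.
set P2 := fun (w : W) (y0 : Y) => \sum_s l2 ((w, y0), s) * e1 s.
set T := fun (vx : (V * X)%type) (wy : (W * Y)%type) r => \sum_s \sum_t
   x ((vx.1, wy.1), s) * a ((vx.2, wy.2), t) * mu S c' c (s, t) r.
transitivity (\sum_r l3 r * \sum_(vx : (V * X)%type) \sum_(wy : (W * Y)%type)
   P1 vx.1 vx.2 * P2 wy.1 wy.2 * T vx wy r).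
  rewrite sum_pair exchange_big; apply: eq_bigr => r _ /=.
  rewrite big_distrr /= sum_pair /= sum_pair; apply: eq_bigr => -[v x0] _.
  rewrite exchange_big sum_pair big_distrr; apply: eq_bigr => -[w y0] _ /=.
  rewrite /P1 /P2 sum2_prod; apply: eq_bigr => s2 _; apply: eq_bigr => s1 _.
  rewrite /T /=; ring.
apply: eq_bigr => r _; congr (_ * _).
transitivity (\sum_v \sum_w \sum_x0 \sum_y0 \sum_s \sum_t
   P1 v x0 * P2 w y0 * (x ((v, w), s) * a ((x0, y0), t) * mu S c' c (s, t) r)).
  rewrite sum_pair; apply: eq_bigr => v _.
  under eq_bigr do rewrite sum_pair.
  rewrite exchange_big; apply: eq_bigr => w _; apply: eq_bigr => x0 _.
  apply: eq_bigr => y0 _; rewrite /T big_distrr /=; apply: eq_bigr => s _.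
  by rewrite big_distrr /=; apply: eq_bigr => t _.
symmetry; rewrite sum_pair.
transitivity (\sum_s \sum_t \sum_(vw : (V * W)%type) \sum_(xy : (X * Y)%type)
   x (vw, s) * (a (xy, t) * (P1 vw.1 xy.1 * P2 vw.2 xy.2)) * mu S c' c (s, t) r).
  apply: eq_bigr => s _; apply: eq_bigr => t _ /=.
  rewrite big_distrl /=; apply: eq_bigr => vw _.
  by rewrite big_distrr big_distrl /=.
rewrite swap22 sum_pair; apply: eq_bigr => v _; apply: eq_bigr => w _.
rewrite sum_pair; apply: eq_bigr => x0 _; apply: eq_bigr => y0 _ /=.
apply: eq_bigr => s _; apply: eq_bigr => t _; ring.
Qed.

Lemma app_sum (I J K : finType) (M : lmap R I J) (F : K -> vec R I) :
  app M (fun i => \sum_k F k i) = fun j => \sum_k app M (F k) j.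
Proof.
apply: funext => j; rewrite /app.
under eq_bigr do rewrite big_distrl.
by rewrite exchange_big.
Qed.

Lemma sc1_sum (K : finType) (G : K -> vec R (Sidx S (dO tunit))) :
  sc1 (fun j => \sum_k G k j) = \sum_k sc1 (G k).
Proof.
rewrite sc1_pair /pair.
under eq_bigr do rewrite big_distrr.
rewrite exchange_big; apply: eq_bigr => k _.
by rewrite sc1_pair.
Qed.

Lemma pair_dec1 (y' y : vec R (Sidx S (dO tunit))) : pair y' y = sc1 y * pair y' e1.
Proof.
rewrite /pair big_distrr; apply: eq_bigr => s _ /=.
by rewrite (dec1 y s) mulrCA.
Qed.

Lemma phi_pair (V X : finType) (l : vec R ((V * X) * Sidx S (dO tunit))%type) v x0 y :
  pair (slice l (v, x0)) y = sc1 y * phi_of l x0 v.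
Proof. by rewrite pair_dec1. Qed.

Lemma core (V W X Y : finType) (Q : system (V * W)%type) c' (x : vec R ((V * W) * Sidx S c')%type)
  c (a : vec R ((X * Y) * Sidx S c)%type) l1 l2 l3 :
  is_sys Q -> sdual Q c' x ->
  Q c (tensid R _ _ _ (mtens (phi_of l1) (phi_of l2)) a) ->
  dualc (Acone R C S (tO c' c)) l3 ->
  0 <= pair (etens (etens l1 l2) l3) (xa_tens R C S V W X Y c' c x a).
Proof.
move=> HQ Hx Hb Hl3; rewrite I1.
set b := tensid R _ _ _ _ a in Hb *.
apply: Hl3 => psi.
have Hq := HQ.2 _ _ (thetaP psi) b Hb.
have := Hx _ Hq.
rewrite pair_idtens.
have -> : (fun st : (Sidx S c' * Sidx S c)%type => \sum_vw x (vw, st.1) * b (vw, st.2)) =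
  (fun st => \sum_vw etens (slice x vw) (slice b vw) st) by [].
rewrite (app_sum (mu S c' c) (fun vw => etens (slice x vw) (slice b vw))) (app_sum (SM psi)) sc1_sum.
congr (0 <= _); apply: eq_bigr => vw _.
by rewrite slice_idtens pairC thetaP_spec.
Qed.

End Core.


Set Implicit Arguments.

Section Phi.
Variables (R : realType) (C : sacat) (S : stem R C).
Notation SM := (Smap S).
Notation dl := (delta S).
Notation system := (system R C S).
Notation is_sys G := (is_system R C S _ G).
Notation sdual G := (sysdual R C S _ G).
Notation smin G H := (systens_min R C S _ _ G H).
Notation cpm G H psi := (cp R C S _ _ G H psi).
Notation e1 := (e1 R C S).
Notation sc1 := (sc1 R C S).

Lemma pair_suml (I K : finType) (F : K -> vec R I) y :
  pair (fun i => \sum_k F k i) y = \sum_k pair (F k) y.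
Proof.
rewrite /pair; under eq_bigr do rewrite big_distrl.
by rewrite exchange_big.
Qed.

Lemma phi_cp (V X : finType) (D : system V) (G : system X) l :
  dualc (smin D G (dO tunit)) l -> cpm G (sdual D) (phi_of l).
Proof.
move=> Hl c g Hg d Hd.
have Hz := (systens_min_system D G).2 _ _ (evm c) _ (systens_min_gen Hd Hg).
have := Hl _ Hz.
rewrite !pair_idtens sum_pair; congr (0 <= _).
apply: eq_bigr => v _.
have -> : slice (tensid R X V (Sidx S c) (phi_of l) g) v =
   (fun s => \sum_x0 vscale (phi_of l x0 v) (slice g x0) s).
  by apply: funext => s; rewrite /slice /tensid /vscale; apply: eq_bigr => x0 _; rewrite mulrC.
rewrite pair_suml; apply: eq_bigr => x0 _.
by rewrite phi_pair tau_slice evm_spec [RHS]pairC pair_scaler [RHS]mulrC.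
Qed.

Definition lid (X : finType) : vec R ((X * X) * Sidx S (dO tunit))%type :=
  fun p => (p.1.1 == p.1.2)%:R * f1 p.2.

Lemma phi_lid (X : finType) : phi_of (@lid X) = @mid R X.
Proof.
apply: funext => x0; apply: funext => v.
rewrite /phi_of /lid /mid /=.
under eq_bigr do rewrite -mulrA.
rewrite -big_distrr /=.
have -> : \sum_i f1 i * e1 i = sc1 e1 by rewrite sc1_pair.
by rewrite sc1_e1 mulr1 eq_sym.
Qed.

Lemma lid_dual (X : finType) (G : system X) :
  is_sys G -> dualc (smin (sdual G) G (dO tunit)) (@lid X).
Proof.
move=> HG z Hz.
pose K := fun (e : Obj C) (z : vec R ((X * X) * Sidx S e)%type) =>
  forall psi : Hom C e (dO tunit), 0 <= pair (@lid X) (idtens R _ _ _ (SM psi) z).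
suff : K (dO tunit) z by move/(_ (idm _)); rewrite idtens_id.
apply: Hz.
- split.
  + move=> e.
    apply: ccone_ext (ccone_inter (P := fun _ : Hom C e (dO tunit) => True)
      (K := fun psi z => 0 <= pair (@lid X) (app (@idtensM R _ _ _ (SM psi)) z)) _).
      move=> w; split => Hw.
        by move=> psi; rewrite idtens_app; apply: Hw.
      by move=> psi _; rewrite -idtens_app; apply: Hw.
    move=> psi _.
    apply: (ccone_pre (@idtensM R _ _ _ (SM psi)) (K := fun y => 0 <= pair (@lid X) y)).
    apply: ccone_ext (@ccone_half R _ unit (fun _ => True) (fun _ => @lid X)).
    by move=> w; split => [/(_ tt I)|H t _].
  + move=> e e' f w Hw psi.
    by rewrite idtens_comp; apply: Hw.
- move=> c1 c2 k g Hk Hg psi.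
  have Hq := HG.2 _ _ (thetaP psi) g Hg.
  have := Hk _ Hq.
  rewrite !pair_idtens sum_pair; congr (0 <= _).
  apply: eq_bigr => x0 _.
  rewrite [RHS](bigD1 x0) //= [X in _ + X]big1 ?addr0.
    rewrite phi_pair tau_slice phi_lid /mid eqxx mulr1.
    by rewrite slice_idtens pairC thetaP_spec.
  move=> x1 Hx1.
  by rewrite phi_pair phi_lid /mid (negbTE Hx1) mulr0.
Qed.

End Phi.


Set Implicit Arguments.

Lemma part2 (R : realType) (C : sacat) (S : stem R C) :
  (forall (I : Type) (V W : I -> finType)
      (D : forall i, system R C S (V i)) (E : forall i, system R C S (W i))
      (ci : I -> Obj C) (x : forall i, vec R ((V i * W i) * Sidx S (ci i))%type),
     (forall i, proper_system R C S (V i) (D i) /\ proper_system R C S (W i) (E i)) ->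
     (forall i, systens_max R C S (V i) (W i) (D i) (E i) (ci i) (x i)) ->
     forall (X Y : finType) (G : system R C S X) (H : system R C S Y),
        proper_system R C S X G -> proper_system R C S Y H ->
        forall (c : Obj C) (a : vec R ((X * Y) * Sidx S c)%type),
          systens_min R C S X Y G H c a ->
          forall i, rhs_cond R C S (V i) (W i) X Y (D i) (E i) G H (ci i) (x i) c a).
Proof.
move=> I V W D E ci x HDE Hx X Y G H HG HH c a Ha i l1 l2 l3 Hl1 Hl2 Hl3.
have [[HD _ _] [HE _ _]] := HDE i.
apply: (core (Q := systens_min R C S _ _ (sysdual R C S _ (D i)) (sysdual R C S _ (E i)))) => //.
- exact: systens_min_system.
- exact: Hx i.
- apply: (@systens_min_functor R C S X (V i) Y (W i) G (sysdual R C S _ (D i)) H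
     (sysdual R C S _ (E i)) (phi_of l1) (phi_of l2) _ _ _ _ c a Ha).
  + exact: sysdual_system.
  + exact: sysdual_system.
  + exact: phi_cp.
  + exact: phi_cp.
Qed.


Set Implicit Arguments.

Section Bip.
Variable R : realType.
Variable I : finType.

Definition nrm (v : vec R I) := pair v v.
Definition vsub (a b : vec R I) : vec R I := fun i => a i - b i.

Lemma nrm_ge0 v : 0 <= nrm v.
Proof. by apply: sumr_ge0 => i _; rewrite -expr2 sqr_ge0. Qed.

Lemma nrm_coord v i : v i ^+ 2 <= nrm v.
Proof.
rewrite /nrm /pair (bigD1 i) //= -expr2 lerDl.
by apply: sumr_ge0 => j _; rewrite -expr2 sqr_ge0.
Qed.

Lemma nrm_eq0 v : nrm v = 0 -> v = @vzero R I.
Proof.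
move=> H; apply: funext => i; rewrite /vzero.
have := nrm_coord v i; rewrite H => Hi.
have : v i ^+ 2 = 0 by apply/eqP; rewrite eq_le Hi sqr_ge0.
by move/eqP; rewrite sqrf_eq0 => /eqP.
Qed.

Lemma pair_subr (l a b : vec R I) : pair l (vsub a b) = pair l a - pair l b.
Proof. by rewrite /pair -sumrB; apply: eq_bigr => i _; rewrite /vsub mulrBr. Qed.

Lemma abs_le (x c : R) : `|x| <= c -> -c <= x /\ x <= c.
Proof. by rewrite ler_norml => /andP[]. Qed.

Lemma le_abs (x c : R) : -c <= x -> x <= c -> `|x| <= c.
Proof. by move=> H1 H2; rewrite ler_norml H1 H2. Qed.

Lemma sq_bound (x a b : R) : 0 <= a -> 0 <= b -> x ^+ 2 <= 2 * a ^+ 2 + 2 * b ^+ 2 ->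
  `|x| <= 2 * a + 2 * b.
Proof.
move=> a0 b0 H.
have h : x ^+ 2 <= (2 * a + 2 * b) ^+ 2 by have := mulr_ge0 a0 b0; nra.
rewrite -ler_sqr ?nnegrE ?normr_ge0 //; last by lra.
by rewrite real_normK ?num_real.
Qed.

Lemma small_inv (e : R) : 0 < e -> exists m : nat, 2 / (m.+1)%:R < e.
Proof.
move=> e0; have e2 : 0 < e / 2 by lra.
have [k Hk] := ltr_add_invr e2; exists k; rewrite add0r in Hk.
have : 0 < (k.+1)%:R^-1 :> R by rewrite invr_gt0 ltr0Sn.
move: (k.+1%:R^-1 : R) Hk => t Ht ht; lra.
Qed.

Lemma le_of_small (x y C : R) : 0 <= C ->
  (forall m : nat, x <= y + C * (m.+1)%:R^-1) -> x <= y.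
Proof.
move=> C0 H; rewrite leNgt; apply/negP => Hxy.
have e0 : 0 < (x - y) / (C + 1) by apply: divr_gt0; lra.
have [k Hk] := ltr_add_invr e0; rewrite add0r in Hk.
have := H k.
have hC : (x - y) / (C + 1) * (C + 1) = x - y by rewrite divfK //; lra.
have : C * (k.+1)%:R^-1 <= C * ((x - y) / (C + 1)) by rewrite ler_wpM2l // ltW.
have : 0 < (k.+1)%:R^-1 :> R by rewrite invr_gt0 ltr0Sn.
move: (k.+1%:R^-1 : R) Hk => t Ht; move: ((x - y) / (C + 1)) e0 Ht hC => q q0 Ht hC.
nra.
Qed.

Section Sep.
Variables (K : vec R I -> Prop) (HK : ccone K) (z : vec R I) (Hz : ~ K z).

Let E : set R := fun r => exists k, K k /\ r = - nrm (vsub k z).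

Let hasE : has_sup E.
Proof.
case: HK => _ K0 _ _; split.
  by exists (- nrm (vsub (@vzero R I) z)); exists (@vzero R I).
exists 0 => r [k [_ ->]]; rewrite oppr_le0; exact: nrm_ge0.
Qed.

Let s := sup E.

Let F1 k : K k -> - s <= nrm (vsub k z).
Proof.
move=> Kk; have := sup_upper_bound hasE; move/(_ (- nrm (vsub k z))).
by rewrite lerNl; apply; exists k.
Qed.

Let s_le0 : 0 <= - s.
Proof.
rewrite oppr_ge0; apply: ge_sup; first by case: hasE.
move=> r [k [_ ->]]; rewrite oppr_le0; exact: nrm_ge0.
Qed.

Let F2 eps : 0 < eps -> exists k, K k /\ nrm (vsub k z) < - s + eps.
Proof.
move=> e0; have [r [k [Kk ->]] Hr] := sup_adherent e0 hasE.
by exists k; split => //; rewrite /s; lra.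
Qed.

Let epsn (n : nat) : R := ((n.+1)%:R ^+ 2)^-1.
Let epsn_gt0 n : 0 < epsn n.
Proof. by rewrite /epsn invr_gt0 exprn_gt0 // ltr0Sn. Qed.

Let kseq (n : nat) : vec R I := proj1_sig (cid (F2 (epsn_gt0 n))).
Let kseqK n : K (kseq n).
Proof. by rewrite /kseq; case: cid => k [] /=. Qed.
Let kseqN n : nrm (vsub (kseq n) z) < - s + epsn n.
Proof. by rewrite /kseq; case: cid => k [] /=. Qed.

Let para (a b : vec R I) : nrm (vsub a b) = 2 * nrm (vsub a z) + 2 * nrm (vsub b z)
  - 4 * nrm (vsub (vscale 2^-1 (vadd a b)) z).
Proof.
rewrite /nrm /pair !mulr_sumr -big_split -sumrB /=; apply: eq_bigr => i _.
rewrite /vsub /vscale /vadd; field.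
by [].
Qed.

Let cn (n : nat) : R := 2 / (n.+1)%:R.

Let kseq_cauchy n m i : `|kseq n i - kseq m i| <= cn n + cn m.
Proof.
have mid : K (vscale 2^-1 (vadd (kseq n) (kseq m))).
  case: HK => _ _ KD KZ; apply: KZ; first by rewrite invr_ge0 ler0n.
  by apply: KD.
have H1 := F1 mid.
have H2 := para (kseq n) (kseq m).
have Hn := kseqN n; have Hm := kseqN m.
have Hc := nrm_coord (vsub (kseq n) (kseq m)) i.
have : (kseq n i - kseq m i) ^+ 2 <= 2 * epsn n + 2 * epsn m.
  rewrite /vsub in Hc; lra.
rewrite /epsn /cn -!exprVn => Hx.
have a0 : 0 <= ((n.+1)%:R)^-1 :> R by rewrite invr_ge0 ler0n.
have b0 : 0 <= ((m.+1)%:R)^-1 :> R by rewrite invr_ge0 ler0n.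
by have := sq_bound a0 b0 Hx.
Qed.

Let Pset i : set R := fun r => exists n, r = kseq n i - cn n.
Let hasP i : has_sup (Pset i).
Proof.
split; first by exists (kseq 0 i - cn 0); exists 0%N.
exists (kseq 0 i + cn 0) => r [n ->].
have := kseq_cauchy n 0 i; move/abs_le; lra.
Qed.

Let pl : vec R I := fun i => sup (Pset i).

Let pl_bound m i : `|pl i - kseq m i| <= cn m.
Proof.
have H1 : kseq m i - cn m <= pl i by apply: (sup_upper_bound (hasP i)); exists m.
have H2 : pl i <= kseq m i + cn m.
  apply: ge_sup; first by case: (hasP i).
  move=> r [n ->]; have := kseq_cauchy n m i; move/abs_le; lra.
apply: le_abs; lra.
Qed.

Let Kpl : K pl.
Proof.
case: HK => Kc _ _ _; apply: Kc => e e0.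
have [m Hm] := small_inv e0.
exists (kseq m); split => // i.
by rewrite distrC; apply: le_lt_trans (pl_bound m i) Hm.
Qed.

Let cn_gt0 m : 0 < cn m.
Proof. by rewrite /cn divr_gt0 // ltr0Sn. Qed.

Let coord_bound (b d c : R) : `|d| <= c -> (b + d) ^+ 2 <= b ^+ 2 + 2 * c * (1 + b ^+ 2) + c ^+ 2.
Proof.
move=> Hd; have [H1 H2] := abs_le Hd.
have c0 : 0 <= c by lra.
have hb1 : `|b| <= 1 + b ^+ 2.
  have [b0|b0] := lerP 0 b.
    by rewrite ger0_norm //; nra.
  by rewrite ltr0_norm //; nra.
have hbd : b * d <= `|b| * c.
  apply: le_trans (ler_norm _) _; rewrite normrM.
  by apply: ler_wpM2l.
have : `|b| * c <= (1 + b ^+ 2) * c by apply: ler_wpM2r.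
nra.
Qed.

Let nrm_pl : nrm (vsub pl z) <= - s.
Proof.
set N := #|I|%:R : R.
have N0 : 0 <= N by rewrite ler0n.
apply: (@le_of_small _ _ (1 + 4 * (N + 1 + - s) + 4 * N)); first by have := s_le0; lra.
move=> m.
have Hb := kseqN m.
set b := vsub (kseq m) z in Hb.
set c := cn m.
have H : nrm (vsub pl z) <= nrm b + 2 * c * (N + nrm b) + N * c ^+ 2.
  have -> : nrm b + 2 * c * (N + nrm b) + N * c ^+ 2 =
     \sum_i (b i ^+ 2 + 2 * c * (1 + b i ^+ 2) + c ^+ 2).
    rewrite /N /nrm /pair !big_split /= -mulr_sumr big_split /= !sumr_const.
    rewrite -[c ^+ 2 *+ _]mulr_natl.
    under [in RHS]eq_bigr do rewrite expr2.
    rewrite /=; ring.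
  rewrite /nrm /pair; apply: ler_sum => i _.
  have := coord_bound (b i) (pl_bound m i); rewrite /b /vsub -!expr2.
  by rewrite (_ : kseq m i - z i + (pl i - kseq m i) = pl i - z i) //; ring.
move: H Hb; rewrite /c /cn /epsn -exprVn.
have t0 : 0 < (m.+1)%:R^-1 :> R by rewrite invr_gt0 ltr0Sn.
have t1 : (m.+1)%:R^-1 <= 1 :> R by rewrite invf_le1 ?ltr0Sn // ler1n.
have B0 := nrm_ge0 b.
have S0 := s_le0.
move: ((m.+1)%:R^-1 : R) t0 t1 => t t0 t1.
move: (nrm b) (nrm (vsub pl z)) B0 => B X B0 H Hb.
have tt : t ^+ 2 <= t by rewrite expr2 ger_pMl.
have hB : B <= - s + 1 by lra.
have h1 : t * B <= t * (- s + 1) by rewrite ler_wpM2l // ltW.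
have h2 : N * t ^+ 2 <= N * t by rewrite ler_wpM2l.
nra.
Qed.

Let expand (a d : vec R I) t :
  nrm (fun i => a i + t * d i) = nrm a + 2 * t * pair a d + t ^+ 2 * nrm d.
Proof.
rewrite /nrm /pair !mulr_sumr -!big_split /=; apply: eq_bigr => i _; ring.
Qed.

Let variational k : K k -> 0 <= pair (vsub pl z) (vsub k pl).
Proof.
move=> Kk.
set P := pair (vsub pl z) (vsub k pl); set Nn := nrm (vsub k pl).
have key t : 0 <= t -> t <= 1 -> 0 <= 2 * t * P + t ^+ 2 * Nn.
  move=> t0 t1.
  have Kq : K (vadd (vscale (1 - t) pl) (vscale t k)).
    case: HK => _ _ KD KZ; apply: KD; apply: KZ => //; lra.
  have := F1 Kq.
  have -> : vsub (vadd (vscale (1 - t) pl) (vscale t k)) z =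
    (fun i => vsub pl z i + t * vsub k pl i).
    by apply: funext => i; rewrite /vsub /vadd /vscale; ring.
  rewrite expand -/P -/Nn.
  have := nrm_pl; lra.
have N0 : 0 <= Nn := nrm_ge0 _.
rewrite leNgt; apply/negP => HP.
have D0 : 0 < Nn - P by lra.
set t := - P / (Nn - P).
have ht : t * (Nn - P) = - P by rewrite /t divfK // gt_eqF.
have t0 : 0 < t by rewrite /t divr_gt0 // oppr_gt0.
have t1 : t <= 1.
  by rewrite /t ler_pdivrMr // mul1r; lra.
have := key t (ltW t0) t1.
move: t t0 t1 ht => t t0 t1 ht.
nra.
Qed.

Lemma sep_exists : exists l, dualc K l /\ pair l z < 0.
Proof.
exists (vsub pl z).
have hp1 := variational (let: And4 _ K0 _ _ := HK in K0).
have Kp2 : K (vscale 2 pl) by case: HK => _ _ _ KZ; apply: KZ => //; exact: Kpl.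
have hp2 := variational Kp2.
rewrite !pair_subr pair_scaler in hp1 hp2.
rewrite (_ : pair _ (@vzero R I) = 0) in hp1; last exact: pair_zeror.
have h0 : pair (vsub pl z) pl = 0 by lra.
split.
  move=> k Kk; have := variational Kk; rewrite pair_subr h0; lra.
have : pair (vsub pl z) (vsub pl z) = pair (vsub pl z) pl - pair (vsub pl z) z.
  by rewrite pair_subr.
rewrite h0.
have : nrm (vsub pl z) <> 0.
  move/nrm_eq0 => H; apply: Hz.
  have -> : z = pl by apply: funext => i; have := congr1 (fun v => v i) H; rewrite /vsub /vzero; lra.
  exact: Kpl.
have := nrm_ge0 (vsub pl z); rewrite /nrm => H1 H2 H3.
have : 0 < pair (vsub pl z) (vsub pl z) by rewrite lt_neqAle eq_sym H1 andbT; apply/eqP.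
lra.
Qed.

End Sep.
Lemma bipolar (K : vec R I -> Prop) : ccone K ->
  forall z, (forall l, dualc K l -> 0 <= pair l z) -> K z.
Proof.
move=> HK z Hl; case: (pselect (K z)) => // Hz.
have [l [Hl1 Hl2]] := sep_exists HK Hz.
by have := Hl _ Hl1; lra.
Qed.

End Bip.


Set Implicit Arguments.

Section PInt.
Variable R : realType.
Variable I : finType.
Local Notation n := #|I|.

Definition v2r (v : vec R I) : 'rV[R]_n := \row_j v (enum_val j).
Definition r2v (y : 'rV[R]_n) : vec R I := fun i => y 0 (enum_rank i).

Lemma r2vK v : r2v (v2r v) = v.
Proof. by apply: funext => i; rewrite /r2v mxE enum_rankK. Qed.

Lemma v2rK y : v2r (r2v y) = y.
Proof. by apply/rowP => j; rewrite mxE /r2v enum_valK. Qed.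

Lemma r2v_add a b : r2v (a + b) = vadd (r2v a) (r2v b).
Proof. by apply: funext => i; rewrite /r2v /vadd mxE. Qed.

Lemma r2v_scale c a : r2v (c *: a) = vscale c (r2v a).
Proof. by apply: funext => i; rewrite /r2v /vscale mxE. Qed.

Lemma r2v_zero : r2v 0 = @vzero R I.
Proof. by apply: funext => i; rewrite /r2v /vzero mxE. Qed.

Lemma pair_r2v (a b : 'rV[R]_n) : pair (r2v a) (r2v b) = (a *m b^T) 0 0.
Proof.
rewrite mxE /pair (reindex (@enum_rank I)) /=; last first.
  by apply: onW_bij; exact: enum_rank_bij.
by apply: eq_bigr => i _; rewrite /r2v mxE.
Qed.

Lemma conic_comb (N : vec R I -> Prop) m (B : 'M[R]_(m, n)) (al : 'rV[R]_m) :
  ccone N -> (forall j, N (r2v (row j B))) -> (forall j, 0 <= al 0 j) ->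
  N (r2v (al *m B)).
Proof.
move=> [_ N0 ND NZ] HB Hal.
rewrite mulmx_sum_row.
apply: (big_ind (fun y => N (r2v y))).
- by rewrite r2v_zero.
- by move=> a b Ha Hb; rewrite r2v_add; apply: ND.
- by move=> j _; rewrite r2v_scale; apply: NZ.
Qed.

Lemma sub_colmx m (B : 'M[R]_(m, n)) (u : 'rV[R]_n) : (B <= col_mx B u)%MS.
Proof. by rewrite -addsmxE addsmxSl. Qed.

Lemma dual_interior (K : vec R I -> Prop) : ccone K -> sharp K -> has_interior (dualc K).
Proof.
move=> HK Hs.
set N := dualc K.
have HN : ccone N := ccone_dualc K.
pose Pr r := exists m (B : 'M[R]_(m, n)), (forall j, N (r2v (row j B))) /\ \rank B = r.
have ex0 : exists r, `[< Pr r >].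
  exists 0%N; apply/asboolP; exists 0%N, 0; split; first by case.
  exact: mxrank0.
have ub : forall r, `[< Pr r >] -> (r <= n)%N.
  by move=> r /asboolP [m [B [_ <-]]]; exact: rank_leq_col.
case: (ex_maxnP ex0 ub) => r0 /asboolP [m [B [HB Hr]]] Hmax.
have Hsub : forall l, N l -> (v2r l <= B)%MS.
  move=> l Nl; case: (boolP (v2r l <= B)%MS) => // Hn; exfalso.
  have HB' : forall j, N (r2v (row j (col_mx B (v2r l)))).
    move=> j; rewrite -(splitK j); case: (split j) => k /=.
      by rewrite rowKu.
    rewrite rowKd.
    have -> : row k (v2r l) = v2r l by apply/rowP => j'; rewrite !mxE.
    by rewrite r2vK.
  have Hle : (\rank (col_mx B (v2r l)) <= r0)%N.
    by apply: Hmax; apply/asboolP; exists (m + 1)%N, (col_mx B (v2r l)).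
  have Hlt : (\rank B < \rank (col_mx B (v2r l)))%N.
    rewrite (ltn_leqif (mxrank_leqif_sup (sub_colmx B (v2r l)))).
    by rewrite col_mx_sub submx_refl /=.
  by move: (leq_trans Hlt Hle); rewrite Hr ltnn.
have [Hfull|Hnf] := boolP (row_full B).
- set P := pinvmx B.
  set S := \sum_k \sum_j `|P k j|.
  have S0 : 0 <= S by apply: sumr_ge0 => k _; apply: sumr_ge0 => j _.
  set e := (1 + S)^-1.
  have e0 : 0 < e by rewrite /e invr_gt0; lra.
  exists (r2v (const_mx 1 *m B)), e => // x Hx.
  set d := v2r x - const_mx 1 *m B.
  set al := const_mx 1 + d *m P.
  have Hx' : v2r x = al *m B.
    rewrite /al mulmxDl /P mulmxKpV; last exact: submx_full.
    by rewrite /d addrC subrK.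
  rewrite -(r2vK x) Hx'.
  apply: conic_comb => // j.
  rewrite /al !mxE.
  have Hd : forall k, `|d 0 k| <= e.
    move=> k; rewrite /d !mxE; apply: ltW.
    have := Hx (enum_val k); rewrite /r2v enum_valK.
    by rewrite mxE.
  have Hsum : `|\sum_k d 0 k * P k j| <= e * S.
    apply: le_trans (ler_norm_sum _ _ _) _.
    rewrite /S mulr_sumr; apply: ler_sum => k _.
    rewrite normrM; apply: le_trans (ler_wpM2r (normr_ge0 _) (Hd k)) _.
    rewrite ler_wpM2l ?(ltW e0) //.
    rewrite (bigD1 j) //= lerDl; apply: sumr_ge0 => j' _.
    exact: normr_ge0.
  have eS : e * S < 1.
    rewrite /e mulrC -ltr_pdivlMr ?invr_gt0; last lra.
    by rewrite invrK; lra.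
  have := abs_le Hsum; lra.
- exfalso.
  have Hlt : (\rank B < n)%N.
    by rewrite ltn_neqAle rank_leq_col andbT.
  set Kr := kermx B^T.
  have HK0 : Kr != 0.
    by rewrite -mxrank_eq0 mxrank_ker mxrank_tr subn_eq0 -ltnNge.
  have [i Hi] : exists i, row i Kr != 0.
    case: (pselect (exists i, row i Kr != 0)) => // Hno; exfalso.
    apply: (negP HK0); apply/eqP/row_matrixP => i; rewrite row0; apply/eqP.
    by apply: contraT => Hi; exfalso; apply: Hno; exists i.
  set y := row i Kr.
  have Hy : y *m B^T = 0 by rewrite /y -row_mul mulmx_ker row0.
  have Hperp : forall l, N l -> pair l (r2v y) = 0.
    move=> l Nl; have /submxP [D HD] := Hsub l Nl.
    rewrite -(r2vK l) pair_r2v HD.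
    have -> : D *m B *m y^T = D *m (y *m B^T)^T by rewrite trmx_mul trmxK mulmxA.
    by rewrite Hy trmx0 mulmx0 mxE.
  have K1 : K (r2v y).
    apply: bipolar => // l Hl; rewrite Hperp //.
  have K2 : K (vopp (r2v y)).
    apply: bipolar => // l Hl.
    have -> : vopp (r2v y) = vscale (-1) (r2v y).
      by apply: funext => k; rewrite /vopp /vscale mulN1r.
    by rewrite pair_scaler Hperp // mulr0.
  have := Hs _ K1 K2.
  move/(congr1 (@v2r)); rewrite v2rK => Hy0.
  move: Hi; rewrite -/y Hy0; apply/negP; rewrite negbK.
  by apply/eqP/rowP => k; rewrite !mxE.
Qed.

End PInt.


Set Implicit Arguments.

Section Dual.
Variables (R : realType) (C : sacat) (S : stem R C).
Notation SM := (Smap S).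
Notation dl := (delta S).
Notation system := (system R C S).
Notation is_sys G := (is_system R C S _ G).
Notation sdual G := (sysdual R C S _ G).
Notation smin G H := (systens_min R C S _ _ G H).
Notation cpm G H psi := (cp R C S _ _ G H psi).
Notation proper G := (proper_system R C S _ G).
Notation e1 := (e1 R C S).
Notation u1 := (u1 R C S).
Notation sc1 := (sc1 R C S).

Lemma dd_sup X (G : system X) c w : is_sys G -> G c w -> sdual (sdual G) c w.
Proof.
move=> HG Hw g Hg.
have := Hg _ (HG.2 _ _ (ddm c) w Hw).
rewrite !pair_idtens; congr (0 <= _); apply: eq_bigr => x _.
by rewrite slice_idtens pairC ddm_spec pairC.
Qed.

Lemma dd_sub X (G : system X) c w : is_sys G -> sdual (sdual G) c w -> G c w.
Proof.
move=> HG Hw.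
apply: (bipolar (HG.1 c)) => m Hm.
pose g := idtens R X _ _ (delta_inv S c) m.
have Hg : sdual G (dO c) g.
  move=> g' Hg'.
  have := Hm _ (HG.2 _ _ (ddinv c) g' Hg').
  rewrite !pair_idtens; congr (0 <= _); apply: eq_bigr => x _.
  rewrite -{1}(delta_Kinv (slice m x)) ddinv_spec pairC.
  by [].
have := Hw _ Hg.
rewrite pairC !pair_prod; congr (0 <= _); apply: eq_bigr => x _.
by rewrite slice_idtens /g slice_idtens delta_Kinv.
Qed.

Lemma tensid_mid (X I : finType) g : tensid R X X I (@mid R X) g = g.
Proof.
apply: funext => -[x s]; rewrite /tensid /mid /= (bigD1 x) //= eqxx mulr1 big1 ?addr0 //.
by move=> y /negbTE Hy; rewrite Hy mulr0.
Qed.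

Lemma mtens_mid (X Y : finType) : mtens (@mid R X) (@mid R Y) = @mid R (X * Y)%type.
Proof.
apply: funext => -[x y]; apply: funext => -[x' y']; rewrite /mtens /mid /=.
by rewrite xpair_eqE; case: (x == x'); case: (y == y'); rewrite ?mulr1 ?mulr0.
Qed.

Lemma cp_dd X (G : system X) : is_sys G -> cpm (sdual (sdual G)) G (@mid R X).
Proof. by move=> HG c g Hg; rewrite tensid_mid; apply: dd_sub. Qed.

Lemma idtens_etens (X I J : finType) (M : lmap R I J) (y : vec R X) (u : vec R I) :
  idtens R X I J M (etens y u) = etens y (app M u).
Proof.
apply: funext => -[x j]; rewrite /idtens /etens /app /= big_distrr /=.
by apply: eq_bigr => s _; rewrite mulrA.
Qed.

Lemma pair_u1_e1 : pair u1 (app (dl tunit) e1) = 1.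
Proof. by rewrite pairC -(sc1_e1 S). Qed.

Lemma slice_dec (X : finType) (g : vec R (X * Sidx S (dO tunit))%type) :
  g = etens (fun x => sc1 (slice g x)) e1.
Proof. by apply: funext => -[x s]; rewrite /etens /= -dec1. Qed.

Lemma cone_at1s_ccone X (G : system X) : is_sys G -> ccone (cone_at1s R C S X G).
Proof.
move=> HG.
apply: ccone_ext (ccone_pre (fun (x : X) (p : (X * Sidx S (dO tunit))%type) => (x == p.1)%:R * e1 p.2)
   (HG.1 (dO tunit))).
move=> y; rewrite /cone_at1s.
have -> : app (fun (x : X) (p : (X * Sidx S (dO tunit))%type) => (x == p.1)%:R * e1 p.2) y = etens y e1.
  apply: funext => -[x s]; rewrite /app /etens /= (bigD1 x) //= eqxx mul1r big1 ?addr0 ?mulrA //.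
  by move=> x' /negbTE Hx; rewrite Hx mul0r mulr0.
by [].
Qed.

Lemma D4 X (G : system X) : proper G -> has_interior (cone_at1 R C S X (sdual G)).
Proof.
move=> [HG _ Hs].
have [z0 [e e0 He]] := dual_interior (cone_at1s_ccone HG) Hs.
exists z0; exists e => // x Hx g Hg.
have := He x Hx.
move=> Hd.
rewrite (slice_dec g) idtens_etens pair_etens pair_u1_e1 mulr1.
apply: Hd; rewrite /cone_at1s -slice_dec; exact: Hg.
Qed.

Lemma interior_perp (X : finType) (K : vec R X -> Prop) (x : vec R X) :
  has_interior K -> (forall y, K y -> pair x y = 0) -> x = @vzero R X.
Proof.
move=> [z0 [e e0 He]] Hp; apply: funext => i; rewrite /vzero.
have K1 : K z0 by apply: He => j; rewrite subrr normr0.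
pose y := fun j => z0 j + (j == i)%:R * (e / 2).
have K2 : K y.
  apply: He => j; rewrite /y addrAC subrr add0r normrM.
  case: (j == i); rewrite ?normr0 ?mul0r // normr1 mul1r ger0_norm; lra.
have := Hp _ K2; have := Hp _ K1.
have -> : pair x y = pair x z0 + x i * (e / 2).
  rewrite /pair /y; under eq_bigr do rewrite mulrDr; rewrite big_split /=.
  congr (_ + _); rewrite (bigD1 i) //= eqxx mul1r big1 ?addr0 //.
  by move=> j /negbTE ->; rewrite mul0r mulr0.
move=> -> H; move: H; rewrite add0r => /eqP; rewrite mulf_eq0 => /orP[/eqP //|].
by rewrite gt_eqF //; lra.
Qed.

Lemma D5 X (G : system X) : proper G -> sharp (cone_at1s R C S X (sdual G)).
Proof.
move=> [HG Hi _] x Hx Hnx.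
apply: (interior_perp Hi) => y Hy.
have Hg := HG.2 _ _ (ddm tunit) _ Hy.
have key : forall x', sdual G (dO tunit) (etens x' e1) -> 0 <= pair x' y.
  move=> x' Hx'; have := Hx' _ Hg.
  rewrite !idtens_etens pair_etens.
  by rewrite [pair e1 _]pairC ddm_spec -/(sc1 e1) (sc1_e1 S) mulr1.
have h1 := key _ Hx; have h2 := key _ Hnx.
have : pair (vopp x) y = - pair x y.
  by rewrite /pair -sumrN; apply: eq_bigr => i _; rewrite /vopp mulNr.
move=> Hn; rewrite Hn in h2; lra.
Qed.

Lemma proper_dual X (G : system X) : proper G -> proper (sdual G).
Proof.
move=> HG; have [HG1 _ _] := HG; split.
- exact: sysdual_system.
- exact: D4.
- exact: D5.
Qed.

Lemma proper_ddual X (G : system X) : proper G -> proper (sdual (sdual G)).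
Proof.
move=> HG; have [HG1 [z0 [e e0 He]] Hs] := HG; split.
- by do 2 apply: sysdual_system.
- exists z0; exists e => // x Hx; apply: dd_sup => //; exact: He.
- by move=> x H1 H2; apply: Hs; apply: dd_sub.
Qed.

End Dual.


Set Implicit Arguments.

Section Part1.
Variables (R : realType) (C : sacat) (S : stem R C).
Variable T : forall X Y : finType,
      system R C S X -> system R C S Y -> system R C S (X * Y)%type.
Hypothesis HT : sys_tensor R C S T.
Notation SM := (Smap S).
Notation dl := (delta S).
Notation system := (system R C S).
Notation is_sys G := (is_system R C S _ G).
Notation sdual G := (sysdual R C S _ G).
Notation proper G := (proper_system R C S _ G).
Notation sc1 := (sc1 R C S).

Unset Implicit Arguments.
Record Idx := MkIdx {
  iX : finType; iY : finType;
  iG : system iX; iH : system iY;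
  ic : Obj C; ix : vec R ((iX * iY) * Sidx S ic)%type;
  iP1 : proper (sdual iG); iP2 : proper (sdual iH);
  iP3 : proper (sdual (sdual iG)); iP4 : proper (sdual (sdual iH));
  iP5 : sdual (@T iX iY (sdual (sdual iG)) (sdual (sdual iH))) ic ix }.

Lemma part1_fwd (i : Idx) X Y (G : system X) (H : system Y) :
  proper G -> proper H -> forall c a, @T X Y G H c a ->
  rhs_cond R C S (iX i) (iY i) X Y (sdual (iG i)) (sdual (iH i)) G H (ic i) (ix i) c a.
Proof.
move=> HG HH c a Ha l1 l2 l3 H1 H2 H3.
have [HQ _ _] := HT.1 _ _ _ _ (iP3 i) (iP4 i).
apply: (core (Q := @T (iX i) (iY i) (sdual (sdual (iG i))) (sdual (sdual (iH i))))) => //.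
- exact: iP5.
- apply: (HT.2 _ _ _ _ G (sdual (sdual (iG i))) H (sdual (sdual (iH i)))) => //.
  + exact: iP3.
  + exact: iP4.
  + exact: phi_cp.
  + exact: phi_cp.
Qed.

Lemma part1_bwd X Y (G : system X) (H : system Y) :
  proper G -> proper H -> forall c a,
  (forall i : Idx, rhs_cond R C S (iX i) (iY i) X Y (sdual (iG i)) (sdual (iH i)) G H (ic i) (ix i) c a) ->
  @T X Y G H c a.
Proof.
move=> HG HH c a Hall.
have [HTs _ _] := HT.1 _ _ _ _ HG HH.
have HGs : is_sys G by case: HG.
have HHs : is_sys H by case: HH.
apply: (bipolar (HTs.1 c)) => m Hm.
pose x := idtens R (X * Y)%type _ _ (delta_inv S c) m.
have P5 : sdual (@T X Y (sdual (sdual G)) (sdual (sdual H))) (dO c) x.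
  move=> q Hq.
  have [HQ _ _] := HT.1 _ _ _ _ (proper_ddual HG) (proper_ddual HH).
  have Hq' := HQ.2 _ _ (ddinv c) q Hq.
  have Hq'' := HT.2 _ _ _ _ (sdual (sdual G)) G (sdual (sdual H)) H _ _
     (proper_ddual HG) HG (proper_ddual HH) HH (cp_dd HGs) (cp_dd HHs) c _ Hq'.
  rewrite mtens_mid tensid_mid in Hq''.
  have := Hm _ Hq''.
  rewrite !pair_idtens; congr (0 <= _); apply: eq_bigr => xy _.
  by rewrite -{1}(delta_Kinv (slice m xy)) ddinv_spec pairC.
pose i := MkIdx X Y G H (dO c) x (proper_dual HG) (proper_dual HH)
  (proper_ddual HG) (proper_ddual HH) P5.
pose l3 := app (transp (SM (evm c))) (@f1 R C S).
have Hl3 : dualc (Acone R C S (tO (dO c) c)) l3.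
  move=> k Hk; rewrite /l3 pair_transp -sc1_pair; exact: Hk.
have := Hall i (@lid R C S X) (@lid R C S Y) l3 (lid_dual HGs) (lid_dual HHs) Hl3.
rewrite /= I1 !phi_lid mtens_mid tensid_mid.
rewrite /l3 pair_transp -sc1_pair.
rewrite (app_sum (mu S (dO c) c) (fun vw => etens (slice x vw) (slice a vw))) (app_sum (SM (evm c))) sc1_sum.
rewrite pairC pair_prod; congr (0 <= _); apply: eq_bigr => xy _.
rewrite (_ : sc1 _ = pair (app (dl c) (slice x xy)) (slice a xy)); last exact: evm_spec.
by rewrite /x slice_idtens delta_Kinv pairC.
Qed.

End Part1.

Theorem theorem4p1 (R : realType) (C : sacat) (S : stem R C)
  (HAproper : forall c : Obj C, proper_cone (Acone R C S c))
  (HAmin : forall (c d : Obj C) (z : vec R (Sidx S c * Sidx S d)%type),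
      ctens_min (Acone R C S c) (Acone R C S d) z ->
      Acone R C S (tO c d) (app (mu S c d) z))
  (T : forall X Y : finType,
      system R C S X -> system R C S Y -> system R C S (X * Y)%type)
  (HT : sys_tensor R C S T) :
  (exists (I : Type) (V W : I -> finType)
      (D : forall i, system R C S (V i)) (E : forall i, system R C S (W i))
      (ci : I -> Obj C) (x : forall i, vec R ((V i * W i) * Sidx S (ci i))%type),
     (forall i, proper_system R C S (V i) (D i) /\ proper_system R C S (W i) (E i)) /\
     (forall (X Y : finType) (G : system R C S X) (H : system R C S Y),
        proper_system R C S X G -> proper_system R C S Y H ->
        forall (c : Obj C) (a : vec R ((X * Y) * Sidx S c)%type),
          T X Y G H c a <->
          (forall i, rhs_cond R C S (V i) (W i) X Y (D i) (E i) G H (ci i) (x i) c a)))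
  /\
  (forall (I : Type) (V W : I -> finType)
      (D : forall i, system R C S (V i)) (E : forall i, system R C S (W i))
      (ci : I -> Obj C) (x : forall i, vec R ((V i * W i) * Sidx S (ci i))%type),
     (forall i, proper_system R C S (V i) (D i) /\ proper_system R C S (W i) (E i)) ->
     (forall i, systens_max R C S (V i) (W i) (D i) (E i) (ci i) (x i)) ->
     forall (X Y : finType) (G : system R C S X) (H : system R C S Y),
        proper_system R C S X G -> proper_system R C S Y H ->
        forall (c : Obj C) (a : vec R ((X * Y) * Sidx S c)%type),
          systens_min R C S X Y G H c a ->
          forall i, rhs_cond R C S (V i) (W i) X Y (D i) (E i) G H (ci i) (x i) c a).
Proof.
split; last exact: part2.
exists (Idx R C S T), (@iX R C S T), (@iY R C S T),
  (fun i => sysdual R C S _ (@iG R C S T i)), (fun i => sysdual R C S _ (@iH R C S T i)),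
  (@ic R C S T), (@ix R C S T).
split.
  by move=> i; split; [exact: iP1 | exact: iP2].
move=> X Y G H HG HH c a; split.
  by move=> Ha i; apply: part1_fwd.
exact: part1_bwd.
Qed.
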